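(* Assume the setting below (in particular $\gcd(a,d)=1$), and let $(x_0,y_0)\in L$ be the point with $\varphi(x_0,y_0)=g(\mathcal{S})+a$. If $(x_0,y_0)=(s_v-s_{v+1}-1,\,P_{v+1}-1)$, then (a1) $\varphi(x,y)+\varphi(x_0-x,y_0-y)\equiv\varphi(x_0,y_0)\pmod a$ for all integers $0\le x\le x_0$, $0\le y\le y_0$; (a2) $\varphi(x,y)+\varphi(x_0+s_v-x,\,y_0-P_v-y)\equiv\varphi(x_0,y_0)\pmod a$ for all integers $x_0<x\le s_v-1$, $0\le y\le y_0-P_v$. If $(x_0,y_0)=(s_v-1,\,P_{v+1}-P_v-1)$, then (b1) $\varphi(x,y)+\varphi(x_0-x,y_0-y)\equiv\varphi(x_0,y_0)\pmod a$ for all integers $0\le x\le x_0$, $0\le y\le y_0$; (b2) $\varphi(x,y)+\varphi(x_0-s_{v+1}-x,\,y_0+P_{v+1}-y)\equiv\varphi(x_0,y_0)\pmod a$ for all integers $0\le x\le x_0-s_{v+1}$, $y_0<y\le y_0+P_{v+1}$.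
   Context: Setting (AA-semigroups). Let $a,d,k,c$ be positive integers with $\gcd(a,a+d,\ldots,a+kd,c)=1$ and $\gcd(a,d)=1$, and let $\mathcal{S}=\langle a,a+d,\ldots,a+kd,c\rangle$ be the numerical semigroup of non-negative integer combinations of these generators; $g(\mathcal{S})$ is its Frobenius number (largest integer not in $\mathcal{S}$). Put $s_{-1}=a$ and let $s_0$ be the unique integer with $ds_0\equiv c\pmod a$, $0\le s_0<a$. If $s_0=0$ set $m=-1$. Otherwise define $q_{i+1},s_{i+1}$ for $i=0,1,2,\ldots$ by $s_{i-1}=q_{i+1}s_i-s_{i+1}$ with $0\le s_{i+1}<s_i$, and let $m$ be the index with $s_m>0=s_{m+1}$ (so $s_m=\gcd(a,c)$). Define $P_{-1}=0$, $P_0=1$, $P_{i+1}=q_{i+1}P_i-P_{i-1}$ for $i=0,\ldots,m$, and $R_i=\frac1a\big((a+kd)s_i-kcP_i\big)$ for $-1\le i\le m+1$; these are integers with $-c/s_m=R_{m+1}<R_m<\cdots<R_0<R_{-1}=a+kd$. Let $v$ be the unique integer with $R_{v+1}\le0<R_v$. Let $L=A\cup B$, where $A=\{(x,y)\in\mathbb{Z}^2:0\le x\le s_v-1,\ 0\le y\le P_{v+1}-P_v-1\}$ and $B=\{(x,y)\in\mathbb{Z}^2:0\le x\le s_v-s_{v+1}-1,\ P_{v+1}-P_v\le y\le P_{v+1}-1\}$. Define $\varphi:\mathbb{Z}^2\to\mathbb{Z}$, $\varphi(x,y)=\lceil x/k\rceil a+xd+yc$. It is known (Rødseth) that $|L|=a$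 and $\varphi$ maps $L$ bijectively onto $\mathrm{Ap}(\mathcal{S};a)=\{s\in\mathcal{S}:s-a\notin\mathcal{S}\}$; consequently $g(\mathcal{S})+a=\max\varphi(L)$ is attained at $(s_v-s_{v+1}-1,P_{v+1}-1)$ or at $(s_v-1,P_{v+1}-P_v-1)$. *)

(* Defs.v *)
From Stdlib Require Import ZArith Lia.
Open Scope Z_scope.

(* phi(x,y) = ceil(x/k) a + x d + y c ; ceil(x/k) = - floor(-x/k). *)
Definition phi (a d k c x y : Z) : Z := (- ((- x) / k)) * a + x * d + y * c.

Fixpoint sumZ (n : nat) (g : nat -> Z) : Z :=
  match n with O => 0 | S n' => sumZ n' g + g n' end.

(* n belongs to S = < a, a+d, ..., a+kd, c > *)
Definition inS (a d k c n : Z) : Prop :=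
  exists (f : nat -> Z) (e : Z),
    (forall j, 0 <= f j) /\ 0 <= e /\
    n = sumZ (S (Z.to_nat k)) (fun j => f j * (a + Z.of_nat j * d)) + e * c.

Definition is_frobenius (a d k c g : Z) : Prop :=
  ~ inS a d k c g /\ forall n, g < n -> inS a d k c n.

(* The data s_i, q_i, P_i (i >= -1) and m of the context, characterized by their
   defining properties (which determine them uniquely). *)
Definition rodseth_data (a d c : Z) (s q P : Z -> Z) (m : Z) : Prop :=
  s (-1) = a /\
  0 <= s 0 < a /\ (d * s 0 - c) mod a = 0 /\
  -1 <= m /\
  (forall i, -1 <= i <= m -> 0 < s i) /\ s (m + 1) = 0 /\
  (forall i, 0 <= i <= m ->
     s (i - 1) = q (i + 1) * s i - s (i + 1) /\ 0 <= s (i + 1) < s i) /\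
  P (-1) = 0 /\ P 0 = 1 /\
  (forall i, 0 <= i <= m -> P (i + 1) = q (i + 1) * P i - P (i - 1)).

(* R_i = ((a + k d) s_i - k c P_i) / a  (an exact division) *)
Definition R (a d k c : Z) (s P : Z -> Z) (i : Z) : Z :=
  ((a + k * d) * s i - k * c * P i) / a.

Definition inL (s P : Z -> Z) (v x y : Z) : Prop :=
  (0 <= x <= s v - 1 /\ 0 <= y <= P (v + 1) - P v - 1) \/
  (0 <= x <= s v - s (v + 1) - 1 /\ P (v + 1) - P v <= y <= P (v + 1) - 1).

(* Main.v *)
Require Import Defs.
From Stdlib Require Import ZArith Lia.
Open Scope Z_scope.


Lemma modh (a b c t : Z) : 0 < a -> b = c + t * a -> b mod a = c mod a.
Proof. intros Ha ->. rewrite Z.mod_add; lia. Qed.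

Lemma cong (a d c : Z) (s q P : Z -> Z) (m : Z) :
  0 < a -> rodseth_data a d c s q P m ->
  forall n : nat, Z.of_nat n <= m + 1 ->
    (exists t, d * s (Z.of_nat n - 1) - c * P (Z.of_nat n - 1) = t * a) /\
    (exists t, d * s (Z.of_nat n) - c * P (Z.of_nat n) = t * a).
Proof.
  intros Ha (Hs1 & Hs0 & Hmod & Hm & Hpos & Hend & Hrec & HP1 & HP0 & HPrec).
  induction n as [|n IH]; intros Hn.
  - change (Z.of_nat 0) with 0. change (0 - 1) with (-1). split.
    + exists d. rewrite Hs1, HP1. ring.
    + rewrite HP0. exists ((d * s 0 - c) / a).
      pose proof (Z.div_mod (d * s 0 - c) a) as E. rewrite Hmod in E.
      rewrite Z.add_0_r in E by lia. rewrite Z.mul_1_r, (Z.mul_comm _ a). apply E. lia.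
  - destruct IH as [[t1 H1] [t2 H2]]; [lia|].
    rewrite Nat2Z.inj_succ. split.
    + exists t2. now replace (Z.succ (Z.of_nat n) - 1) with (Z.of_nat n) by lia.
    + destruct (Hrec (Z.of_nat n)) as [E _]; [lia|]. unfold Z.succ.
      rewrite (HPrec (Z.of_nat n)) by lia.
      exists (q (Z.of_nat n + 1) * t2 - t1).
      unfold Z.succ.
      assert (Es : s (Z.of_nat n + 1) = q (Z.of_nat n + 1) * s (Z.of_nat n) - s (Z.of_nat n - 1)) by lia.
      rewrite Es.
      transitivity (q (Z.of_nat n + 1) * (d * s (Z.of_nat n) - c * P (Z.of_nat n))
                    - (d * s (Z.of_nat n - 1) - c * P (Z.of_nat n - 1))); [ring|].
      rewrite H1, H2. ring.
Qed.

Lemma congZ (a d c : Z) (s q P : Z -> Z) (m : Z) :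
  0 < a -> rodseth_data a d c s q P m ->
  forall i, -1 <= i <= m + 1 -> exists t, d * s i - c * P i = t * a.
Proof.
  intros Ha HD i Hi.
  assert (Hm : -1 <= m) by (destruct HD as (_ & _ & _ & Hm & _); exact Hm).
  destruct (Z.eq_dec i (m + 1)) as [->|Hne].
  { assert (Hb : Z.of_nat (Z.to_nat (m + 1)) <= m + 1) by (rewrite Z2Nat.id; lia).
    destruct (cong a d c s q P m Ha HD (Z.to_nat (m + 1)) Hb) as [_ [t H]].
    exists t. rewrite Z2Nat.id in H by lia. exact H. }
  assert (Hb : Z.of_nat (Z.to_nat (i + 1)) <= m + 1) by (rewrite Z2Nat.id; lia).
  destruct (cong a d c s q P m Ha HD (Z.to_nat (i + 1)) Hb) as [[t H] _].
  exists t. rewrite Z2Nat.id in H by lia. now replace (i + 1 - 1) with i in H by lia.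
Qed.

Theorem lemma4 (a d k c : Z) (s q P : Z -> Z) (m v x0 y0 : Z) :
  0 < a -> 0 < d -> 0 < k -> 0 < c ->
  Z.gcd (Z.gcd a d) c = 1 ->
  Z.gcd a d = 1 ->
  rodseth_data a d c s q P m ->
  -1 <= v <= m ->
  R a d k c s P (v + 1) <= 0 < R a d k c s P v ->
  inL s P v x0 y0 ->
  is_frobenius a d k c (phi a d k c x0 y0 - a) ->
  ((x0 = s v - s (v + 1) - 1 /\ y0 = P (v + 1) - 1) ->
     (forall x y, 0 <= x <= x0 -> 0 <= y <= y0 ->
        (phi a d k c x y + phi a d k c (x0 - x) (y0 - y)) mod a
          = phi a d k c x0 y0 mod a) /\
     (forall x y, x0 < x <= s v - 1 -> 0 <= y <= y0 - P v ->
        (phi a d k c x y + phi a d k c (x0 + s v - x) (y0 - P v - y)) mod a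
          = phi a d k c x0 y0 mod a)) /\
  ((x0 = s v - 1 /\ y0 = P (v + 1) - P v - 1) ->
     (forall x y, 0 <= x <= x0 -> 0 <= y <= y0 ->
        (phi a d k c x y + phi a d k c (x0 - x) (y0 - y)) mod a
          = phi a d k c x0 y0 mod a) /\
     (forall x y, 0 <= x <= x0 - s (v + 1) -> y0 < y <= y0 + P (v + 1) ->
        (phi a d k c x y + phi a d k c (x0 - s (v + 1) - x) (y0 + P (v + 1) - y)) mod a
          = phi a d k c x0 y0 mod a)).
Proof.
  intros Ha Hd Hk Hc _ _ HD Hv _ _ _.
  destruct (congZ a d c s q P m Ha HD v ltac:(lia)) as [tv Hv0].
  destruct (congZ a d c s q P m Ha HD (v + 1) ltac:(lia)) as [tw Hw0].
  assert (G1 : forall x y, (phi a d k c x y + phi a d k c (x0 - x) (y0 - y)) mod a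
          = phi a d k c x0 y0 mod a).
  { intros x y. unfold phi. eapply modh; [exact Ha|].
    instantiate (1 := - ((- x) / k) - ((- (x0 - x)) / k) + ((- x0) / k)). ring. }
  split; intros _; split; intros x y _ _; try apply G1.
  - unfold phi. eapply modh; [exact Ha|].
    instantiate (1 := - ((- x) / k) - ((- (x0 + s v - x)) / k) + ((- x0) / k) + tv).
    transitivity (- ((- x) / k) * a + x * d + y * c +
      (- ((- (x0 + s v - x)) / k) * a + x0 * d - x * d + (y0 - y) * c)
      + (d * s v - c * P v)); [ring|]. rewrite Hv0. ring.
  - unfold phi. eapply modh; [exact Ha|].
    instantiate (1 := - ((- x) / k) - ((- (x0 - s (v + 1) - x)) / k) + ((- x0) / k) - tw).
    transitivity (- ((- x) / k) * a + x * d + y * c +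
      (- ((- (x0 - s (v + 1) - x)) / k) * a + x0 * d - x * d + (y0 - y) * c)
      - (d * s (v + 1) - c * P (v + 1))); [ring|]. rewrite Hw0. ring.
Qed.
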